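(* Let $G=(V,E)$ be a finite undirected graph with independence number $\alpha_G$. For all $v\in V$, choose numbers $q_v\in(0,1]$ and define \[ c_v=\sum_{S\subseteq V\setminus\{v\}}\frac{\lambda_{S,v}}{1+|S|},\quad \lambda_{S,v}=\Big(\prod_{w\in S}q_w\Big)\Big(\prod_{u\in V\setminus(\{v\}\cup S)}(1-q_u)\Big),\quad Q_v=1-\prod_{w\in\mathcal{N}_v}(1-q_w). \] Then \[ Q=\sum_{v\in V}\frac{q_v c_v}{Q_v}\le\frac{\alpha_G+1}{1-e^{-1}}. \]
   Context: $\mathcal{N}_v=\{v\}\cup\{w:(v,w)\in E\}$ is the closed neighborhood of $v$. The independence number $\alpha_G$ is the largest size of a set of pairwise non-adjacent vertices. *)

(* Defs.v *)
From HB Require Import structures.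
From mathcomp Require Import all_boot all_order all_algebra.
From mathcomp Require Import reals sequences exp.
Set Implicit Arguments. Unset Strict Implicit. Unset Printing Implicit Defensive.
Import Order.TTheory GRing.Theory Num.Theory.
Local Open Scope ring_scope.

Section GraphDefs.
Variable T : finType.
Variable e : rel T.

Definition independent (S : {set T}) : bool :=
  [forall x in S, forall y in S, (x != y) ==> ~~ e x y].

Definition alpha : nat := \max_(S : {set T} | independent S) #|S|.

Definition nbhd (v : T) : {set T} := v |: [set w | e v w].

Variable R : realType.
Variable q : T -> R.

Definition lam (S : {set T}) (v : T) : R :=
  (\prod_(w in S) q w) * \prod_(u in ~: (v |: S)) (1 - q u).

Definition cv (v : T) : R :=
  \sum_(S : {set T} | S \subset ~: [set v]) lam S v / (1 + (#|S|)%:R).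

Definition Qv (v : T) : R := 1 - \prod_(w in nbhd v) (1 - q w).

End GraphDefs.

(* Main.v *)
Require Import Defs.
From HB Require Import structures.
From mathcomp Require Import all_boot all_order all_algebra.
From mathcomp Require Import reals sequences exp.
From mathcomp Require Import ring lra.
Import Order.TTheory GRing.Theory Num.Theory.
Set Implicit Arguments. Unset Strict Implicit. Unset Printing Implicit Defensive.
Local Open Scope ring_scope.

Definition PP (T : finType) (R : realType) (q : T -> R) (S : {set T}) : R :=
  (\prod_(w in S) q w) * \prod_(u in ~: S) (1 - q u).

Lemma PP_sum (T : finType) (R : realType) (q : T -> R) :
  \sum_(S : {set T}) PP q S = 1.
Proof.
have H := @bigA_distr R 0 1 *%R +%R T q (fun i => 1 - q i).
rewrite big1 in H; last by move=> i _ /=; rewrite addrC subrK.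
rewrite [RHS]H; apply: eq_bigr => S _.
rewrite /PP [in RHS](bigID (fun i => i \in S)) /=; congr (_ * _).
  by apply: eq_bigr => i ->.
by apply: eq_big => [i|i]; rewrite ?inE // => /negbTE ->.
Qed.

Lemma PP_ge0 (T : finType) (R : realType) (q : T -> R) (hq : forall v, 0 < q v <= 1) S :
  0 <= PP q S.
Proof.
apply: mulr_ge0; apply: prodr_ge0 => i _.
  by case/andP: (hq i) => /ltW.
by case/andP: (hq i) => _; rewrite subr_ge0.
Qed.

Lemma lam_in (T : finType) (R : realType) (q : T -> R) (S : {set T}) v : v \notin S ->
  q v * lam q S v = PP q (v |: S).
Proof.
move=> vS; rewrite /lam /PP big_setU1 //= mulrA.
by congr (_ * _ * _); apply: eq_bigl.
Qed.

Lemma lam_out (T : finType) (R : realType) (q : T -> R) (S : {set T}) v : v \notin S ->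
  (1 - q v) * lam q S v = PP q S.
Proof.
move=> vS; rewrite /lam /PP.
have -> : ~: S = v |: ~: (v |: S).
  by apply/setP => x; rewrite !inE; case: (x =P v) => // ->; rewrite (negbTE vS).
rewrite [in RHS]big_setU1 /=; last by rewrite !inE eqxx.
by rewrite mulrCA.
Qed.

Lemma sub_notin (T : finType) (S : {set T}) v : (S \subset ~: [set v]) = (v \notin S).
Proof.
apply/subsetP/idP => [H|H x xS]; last by rewrite !inE; apply: contraNneq H => <-.
by apply/negP => /H; rewrite !inE eqxx.
Qed.

Lemma reindex_add (T : finType) (R : realType) v (f : {set T} -> R) :
  \sum_(S : {set T} | v \notin S) f (v |: S) = \sum_(S : {set T} | v \in S) f S.
Proof.
rewrite [RHS](reindex_onto (fun S => v |: S) (fun S => S :\ v)) /=; last first.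
  by move=> S vS; rewrite setD1K.
apply: eq_bigl => S; rewrite setU11 /=.
apply/idP/eqP => [vS|<-]; first by rewrite setU1K.
by rewrite !inE eqxx.
Qed.

Lemma lam_ge0 (T : finType) (R : realType) (q : T -> R) (hq : forall v, 0 < q v <= 1) S v :
  0 <= lam q S v.
Proof.
apply: mulr_ge0; apply: prodr_ge0 => i _.
  by case/andP: (hq i) => /ltW.
by case/andP: (hq i) => _; rewrite subr_ge0.
Qed.

Lemma cv_ge0 (T : finType) (R : realType) (q : T -> R) (hq : forall v, 0 < q v <= 1) v :
  0 <= cv q v.
Proof.
apply: sumr_ge0 => S _; apply: divr_ge0; first exact: lam_ge0.
by rewrite addr_ge0 ?ler0n.
Qed.

Lemma cv_le1 (T : finType) (R : realType) (q : T -> R) (hq : forall v, 0 < q v <= 1) v :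
  cv q v <= 1.
Proof.
apply: (@le_trans _ _ (\sum_(S : {set T} | v \notin S) lam q S v)).
  rewrite /cv; under eq_bigl do rewrite sub_notin.
  apply: ler_sum => S _; apply: ler_piMr; first exact: lam_ge0.
  by rewrite invf_le1 ?lerDl ?ler0n // ltr_wpDr ?ler0n.
rewrite -(PP_sum q) [X in _ <= X](bigID (fun S : {set T} => v \in S)) /= addrC -reindex_add.
rewrite -big_split /=; apply: ler_sum => S vS.
rewrite -(lam_in q vS) -(lam_out q vS) -mulrDl. have -> : (1 - q v + q v) = 1 :> R by rewrite subrK. by rewrite mul1r.
Qed.

Lemma sum_qcv (T : finType) (R : realType) (q : T -> R) (hq : forall v, 0 < q v <= 1) :
  \sum_v q v * cv q v <= 1.
Proof.
have -> : \sum_v q v * cv q v = \sum_v \sum_(S : {set T} | v \in S) PP q S / (#|S|)%:R.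
  apply: eq_bigr => v _; rewrite -reindex_add /cv mulr_sumr.
  under eq_bigl do rewrite sub_notin.
  apply: eq_bigr => S vS; rewrite mulrA lam_in // cardsU1 vS.
  by rewrite natrD.
under eq_bigr do rewrite big_mkcond /=.
rewrite exchange_big /=; apply: (@le_trans _ _ (\sum_(S : {set T}) PP q S)); last by rewrite PP_sum.
apply: ler_sum => S _.
rewrite -big_mkcond /= sumr_const.
case: (posnP #|S|) => [->|n0]; first by rewrite mulr0n PP_ge0.
by rewrite -(mulr_natr (PP q S / _)) divfK // pnatr_eq0 -lt0n n0.
Qed.

Lemma sum_sub (T : finType) (R : realType) (f : T -> R) (A1 A2 : {set T}) :
  A1 \subset A2 -> (forall i, 0 <= f i) -> \sum_(i in A1) f i <= \sum_(i in A2) f i.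
Proof.
move=> sA f0; rewrite [X in _ <= X](big_setID A1) /= (setIidPr sA) lerDl.
exact: sumr_ge0.
Qed.

Definition sig (T : finType) (e : rel T) (R : realType) (q : T -> R) (A : {set T}) (v : T) : R :=
  \sum_(w in nbhd e v :&: A) q w.

Definition alphaA (T : finType) (e : rel T) (A : {set T}) : nat :=
  \max_(S : {set T} | independent e S && (S \subset A)) #|S|.

Lemma sig_pos (T : finType) (e : rel T) (R : realType) (q : T -> R) (hq : forall v, 0 < q v <= 1) (A : {set T}) (v : T) :
  v \in A -> 0 < sig e q A v.
Proof.
move=> vA; apply: (@lt_le_trans _ _ (\sum_(w in [set v]) q w)).
  by rewrite big_set1; case/andP: (hq v).
apply: sum_sub => [|i]; last by case/andP: (hq i) => /ltW.
by rewrite sub1set !inE eqxx vA.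
Qed.

Lemma indep_add (T : finType) (e : rel T) (e_sym : symmetric e) (S : {set T}) v :
  independent e S -> S :&: nbhd e v = set0 -> independent e (v |: S).
Proof.
move=> /forallP iS dS; apply/forallP => x; apply/implyP => xS.
apply/forallP => y; apply/implyP => yS; apply/implyP => xy.
have nvS z : z \in S -> ~~ e v z.
  move=> zS; apply/negP => evz; move/setP: dS => /(_ z).
  by rewrite !inE zS evz orbT.
move: xS yS xy; rewrite !inE => /orP[/eqP->|xS] /orP[/eqP->|yS] xy.
- by move: xy; rewrite eqxx.
- exact: nvS.
- by rewrite e_sym; apply: nvS.
- by move: (iS x); rewrite xS /= => /forallP /(_ y); rewrite yS xy.
Qed.

Lemma cw (T : finType) (e : rel T) (e_sym : symmetric e) (R : realType) (q : T -> R)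
  (hq : forall v, 0 < q v <= 1) n (A : {set T}) :
  (#|A| <= n)%N -> \sum_(v in A) q v / sig e q A v <= (alphaA e A)%:R.
Proof.
have q0 u : 0 <= q u by case/andP: (hq u) => /ltW.
elim: n A => [|n IH] A cA.
  by move: cA; rewrite leqn0 cards_eq0 => /eqP ->; rewrite big_set0 ler0n.
case: (set_0Vmem A) => [->|[v0 v0A]]; first by rewrite big_set0 ler0n.
have [v vA vmin] := arg_minP (P := fun u => u \in A) (sig e q A) v0A.
set N := nbhd e v.
set B := A :\: N.
rewrite (big_setID N) /=.
have H1 : \sum_(i in A :&: N) q i / sig e q A i <= 1.
  apply: (@le_trans _ _ (\sum_(i in A :&: N) q i / sig e q A v)).
    apply: ler_sum => u; rewrite inE => /andP[uA _].
    apply: ler_wpM2l => //; rewrite lef_pV2 ?posrE ?sig_pos //.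
    exact: vmin.
  rewrite -mulr_suml /sig setIC divff //.
  by have := sig_pos e hq vA; rewrite /sig => /gt_eqF ->.
have H2 : \sum_(i in B) q i / sig e q A i <= (alphaA e B)%:R.
  apply: (@le_trans _ _ (\sum_(i in B) q i / sig e q B i)); last first.
    apply: IH; rewrite -ltnS; apply: leq_trans cA.
    rewrite (cardsD1 v A) vA add1n ltnS; apply: subset_leq_card.
    apply/subsetP => x; rewrite !inE => /andP[xN ->]; rewrite andbT.
    by apply: contraNneq xN => ->; rewrite eqxx.
  apply: ler_sum => u uB.
  apply: ler_wpM2l => //; rewrite lef_pV2 ?posrE ?sig_pos //; last first.
    by move: uB; rewrite inE => /andP[].
  apply: sum_sub => //; apply: setIS; exact: subsetDl.
have H3 : forall S : {set T}, independent e S && (S \subset B) -> (#|S|.+1 <= alphaA e A)%N.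
  move=> S /andP[iS sSB].
  have vS : v \notin S.
    by apply/negP => /(subsetP sSB); rewrite !inE eqxx.
  have -> : #|S|.+1 = #|v |: S| by rewrite cardsU1 vS.
  rewrite /alphaA; apply: (@leq_bigmax_cond _ (fun S0 : {set T} => independent e S0 && (S0 \subset A)) (fun S0 : {set T} => #|S0|)).
  apply/andP; split.
    apply: indep_add => //; apply/setP => x; rewrite !inE.
    apply/negP => /andP[xS xN]; move/subsetP: sSB => /(_ x xS).
    by rewrite !inE xN.
  rewrite subUset sub1set vA /=; apply: subset_trans sSB _; exact: subsetDl.
have H4 : (alphaA e B < alphaA e A)%N.
  have a0 : (0 < alphaA e A)%N.
    have := H3 set0; rewrite cards0; apply; rewrite sub0set andbT.
    by apply/forallP => x; rewrite inE.
  rewrite -(prednK a0) ltnS; apply/bigmax_leqP => S hS.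
  by rewrite -ltnS prednK //; apply: H3.
apply: (@le_trans _ _ (1 + (alphaA e B)%:R)); first exact: lerD.
rewrite addrC natr1 ler_nat; exact: H4.
Qed.
Lemma exp_convex (R : realType) (s : R) : 0 <= s <= 1 -> expR (- s) <= 1 - (1 - expR (-1)) * s.
Proof.
case/andP => s0 s1.
have ha := expR_ge1Dx s.
have hb := expR_ge1Dx (s - 1).
rewrite expRD in hb.
rewrite expRN.
have ap : 0 < expR s by apply: expR_gt0.
rewrite -[_^-1]mul1r ler_pdivrMr //.
set a := expR s in ha hb ap *; set b := expR (-1) in hb *.
have h1 : 0 <= (a - 1 - s) * (1 - s) by apply: mulr_ge0; lra.
have h2 : 0 <= s * (a * b - s) by apply: mulr_ge0; lra.
nra.
Qed.

Lemma vertex_bound (T : finType) (e : rel T) (R : realType) (q : T -> R)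
  (hq : forall v, 0 < q v <= 1) v :
  q v * cv q v / Qv e q v <=
    (q v * cv q v + q v / sig e q setT v) / (1 - expR (-1)).
Proof.
have q0 u : 0 <= q u by case/andP: (hq u) => /ltW.
have [qp q1] := andP (hq v).
have c0 := cv_ge0 hq v; have c1 := cv_le1 hq v.
have sp := sig_pos e hq (in_setT v).
set s := sig e q setT v in sp *.
have kp : 0 < 1 - expR (-1 : R) by rewrite subr_gt0 expR_lt1 ltrN10.
set k := 1 - expR (-1) in kp *.
have QL : 1 - expR (- s) <= Qv e q v.
  rewrite /Qv lerD2l lerN2 /s /sig setIT -sumrN expR_sum.
  apply: ler_prod => i _; rewrite subr_ge0; case/andP: (hq i) => _ -> /=.
  exact: expR_ge1Dx.
have qc0 : 0 <= q v * cv q v by apply: mulr_ge0.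
case: (lerP 1 s) => s1.
  have Qk : k <= Qv e q v.
    apply: le_trans QL; rewrite /k lerD2l lerN2 ler_expR lerN2 //.
  apply: (@le_trans _ _ (q v * cv q v / k)).
    by apply: ler_wpM2l => //; rewrite lef_pV2 ?posrE // (lt_le_trans kp).
  apply: ler_wpM2r; first by rewrite invr_ge0 ltW.
  by rewrite lerDl divr_ge0 // ltW.
have Qk : k * s <= Qv e q v.
  apply: le_trans QL; have := exp_convex (s:=s); rewrite ltW //= ltW //=.
  move=> /(_ isT) H; rewrite /k; nra.
have ksp : 0 < k * s by apply: mulr_gt0.
apply: (@le_trans _ _ (q v * cv q v / (k * s))).
  by apply: ler_wpM2l => //; rewrite lef_pV2 ?posrE // (lt_le_trans ksp).
apply: (@le_trans _ _ (q v / (k * s))).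
  by apply: ler_wpM2r; [rewrite invr_ge0 ltW | exact: ler_piMr].
have -> : q v / (k * s) = q v / s / k by rewrite invfM [k^-1 * _]mulrC mulrA.
apply: ler_wpM2r; first by rewrite invr_ge0 ltW.
by rewrite lerDr.
Qed.

Theorem lemma4 (T : finType) (e : rel T) (e_sym : symmetric e)
  (R : realType) (q : T -> R) (hq : forall v, 0 < q v <= 1) :
  \sum_(v : T) q v * cv q v / Qv e q v
    <= ((alpha e)%:R + 1) / (1 - expR (-1)).
Proof.
apply: (@le_trans _ _ (\sum_v (q v * cv q v + q v / sig e q setT v) / (1 - expR (-1)))).
  by apply: ler_sum => v _; apply: vertex_bound.
have kp : 0 < 1 - expR (-1 : R) by rewrite subr_gt0 expR_lt1 ltrN10.
rewrite -mulr_suml; apply: ler_wpM2r; first by rewrite invr_ge0 ltW.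
rewrite big_split /= addrC; apply: lerD; last exact: sum_qcv.
have := cw e_sym hq (leqnn #|[set: T]|).
have -> : alphaA e setT = alpha e.
  by rewrite /alphaA /alpha; apply: eq_bigl => S; rewrite subsetT andbT.
apply: le_trans; rewrite le_eqVlt; apply/orP; left; apply/eqP; apply: eq_bigl => v; by rewrite in_setT.
Qed.
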